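(* Let $A\in M_n(\mathbb{FT})$ and let $G$ be a unit of $M_n(\mathbb{T})$ with $G\otimes A=A\otimes G$. Then $G$ has exactly one eigenvalue.
   Context: $\mathbb{FT}$ is $\mathbb{R}$ with $a\oplus b=\max(a,b)$, $a\otimes b=a+b$; $\mathbb{T}=\mathbb{R}\cup\{-\infty\}$ with the obvious extensions. $M_n(\mathbb{FT})\subseteq M_n(\mathbb{T})$ are the $n\times n$ matrices with entries in these, multiplied by $(A\otimes B)_{i,j}=\bigoplus_k A_{i,k}\otimes B_{k,j}$. $M_n(\mathbb{T})$ is a monoid (identity: $0$ on diagonal, $-\infty$ elsewhere); its units are the matrices with exactly one entry different from $-\infty$ in each row and each column. A real number $\lambda$ is an eigenvalue of $G\in M_n(\mathbb{T})$ if $G\otimes x=\lambda\otimes x$ (i.e. $(G\otimes x)_i=\lambda+x_i$ for all $i$) for some $x\in\mathbb{T}^n$ not all of whose entries are $-\infty$. *)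

(* Defs.v *)
From HB Require Import structures.
From mathcomp Require Import all_boot all_order all_algebra.
From mathcomp Require Import reals.
Set Implicit Arguments. Unset Strict Implicit. Unset Printing Implicit Defensive.
Import Order.TTheory GRing.Theory Num.Theory.
Local Open Scope ring_scope.

(* The tropical semiring T = R ∪ {-oo}: None stands for -oo, Some r for r. *)
Definition trop (R : realType) := option R.

Definition tadd (R : realType) (a b : trop R) : trop R :=
  match a, b with
  | None, _ => b
  | _, None => a
  | Some x, Some y => Some (Num.max x y)
  end.

Definition tmul (R : realType) (a b : trop R) : trop R :=
  match a, b with
  | Some x, Some y => Some (x + y)
  | _, _ => None
  end.

Definition tmulmx (R : realType) (n : nat) (A B : 'M[trop R]_n) : 'M[trop R]_n :=
  \matrix_(i < n, j < n) \big[@tadd R/None]_(k < n) tmul (A i k) (B k j).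

Definition tmulmxv (R : realType) (n : nat) (A : 'M[trop R]_n) (x : 'I_n -> trop R)
  : 'I_n -> trop R :=
  fun i => \big[@tadd R/None]_(k < n) tmul (A i k) (x k).

Definition tid (R : realType) (n : nat) : 'M[trop R]_n :=
  \matrix_(i < n, j < n) if i == j then Some 0 else None.

(* embedding M_n(FT) into M_n(T) *)
Definition tfin (R : realType) (n : nat) (A : 'M[R]_n) : 'M[trop R]_n :=
  map_mx (@Some R) A.

Definition tunit (R : realType) (n : nat) (G : 'M[trop R]_n) : Prop :=
  exists H : 'M[trop R]_n, tmulmx G H = tid R n /\ tmulmx H G = tid R n.

Definition teigenvalue (R : realType) (n : nat) (G : 'M[trop R]_n) (lam : R) : Prop :=
  exists x : 'I_n -> trop R,
    (exists i, x i <> None) /\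
    forall i, tmulmxv G x i = tmul (Some lam) (x i).

(* Main.v *)
Require Import Defs.
From HB Require Import structures.
From mathcomp Require Import all_boot all_order all_algebra all_fingroup.
From mathcomp Require Import reals.
Set Implicit Arguments. Unset Strict Implicit. Unset Printing Implicit Defensive.
Import Order.TTheory GRing.Theory Num.Theory.
Local Open Scope ring_scope.

Section Aux.
Variable R : realType.

Lemma taddA : associative (@tadd R).
Proof. by case=> [a|] [b|] [c|] //=; rewrite maxA. Qed.
Lemma taddC : commutative (@tadd R).
Proof. by case=> [a|] [b|] //=; rewrite maxC. Qed.
Lemma tadd0 : left_id None (@tadd R).
Proof. by case. Qed.

HB.instance Definition _ := Monoid.isComLaw.Build (trop R) None (@tadd R) taddA taddC tadd0.

Lemma tadd_None (a b : trop R) : tadd a b = None -> a = None /\ b = None.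
Proof. by case: a; case: b. Qed.

Lemma big_None (n : nat) (F : 'I_n -> trop R) :
  \big[@tadd R/None]_(k < n) F k = None -> forall k, F k = None.
Proof. by move=> h k; move: h; rewrite (bigD1 k) //= => /tadd_None []. Qed.

Lemma big_single (n : nat) (F : 'I_n -> trop R) k0 :
  (forall k, k != k0 -> F k = None) -> \big[@tadd R/None]_(k < n) F k = F k0.
Proof.
move=> h; rewrite (bigD1 k0) //= big1; first by case: (F k0).
by move=> k /h.
Qed.

Lemma big_ex (n : nat) (F : 'I_n -> trop R) :
  \big[@tadd R/None]_(k < n) F k <> None -> exists k, F k <> None.
Proof.
move=> h; case: (pickP (fun k => F k != None)) => [k /eqP hk|h0]; first by exists k.
by case: h; rewrite big1 // => k _; move: (h0 k) => /negbFE /eqP.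
Qed.
End Aux.
Section Unit.
Variable R : realType.
Variable n : nat.
Variables G H : 'M[trop R]_n.
Hypothesis hGH : tmulmx G H = tid R n.
Hypothesis hHG : tmulmx H G = tid R n.

Lemma tmul_ne (a b : trop R) : tmul a b <> None -> a <> None /\ b <> None.
Proof. by case: a; case: b. Qed.

Lemma tmul_ne' (a b : trop R) : a <> None -> b <> None -> tmul a b <> None.
Proof. by case: a; case: b. Qed.

Lemma diag_ex (X Y : 'M[trop R]_n) : tmulmx X Y = tid R n ->
  forall i, exists k, X i k <> None /\ Y k i <> None.
Proof.
move=> e i; have : tmulmx X Y i i <> None by rewrite e mxE eqxx.
rewrite mxE => /big_ex [k /tmul_ne]; by exists k.
Qed.

Lemma off_None (X Y : 'M[trop R]_n) : tmulmx X Y = tid R n ->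
  forall i j k, i != j -> X i k <> None -> Y k j <> None -> False.
Proof.
move=> e i j k ij h1 h2.
have : tmulmx X Y i j = None by rewrite e mxE (negbTE ij).
rewrite mxE => /big_None /(_ k); exact: tmul_ne'.
Qed.

Lemma rowG_uniq i k k' : G i k <> None -> G i k' <> None -> k = k'.
Proof.
move=> h1 h2; have [m [hm1 hm2]] := diag_ex hHG k'.
have mi : m = i.
  apply/eqP; apply/negPn/negP => mi.
  by apply: (off_None hGH (i:=i) (j:=m) (k:=k')) h2 hm1; rewrite eq_sym.
subst m; apply/eqP; apply/negPn/negP => kk.
by apply: (off_None hHG (i:=k') (j:=k) (k:=i)) hm1 h1; rewrite eq_sym.
Qed.

Lemma colG_uniq i i' k : G i k <> None -> G i' k <> None -> i = i'.
Proof.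
move=> h1 h2; have [m [hm1 hm2]] := diag_ex hGH i.
have mk : m = k by exact: (rowG_uniq hm1 h1).
subst m; apply/eqP; apply/negPn/negP => ii.
by apply: (off_None hGH (i:=i') (j:=i) (k:=k)) h2 hm2; rewrite eq_sym.
Qed.

Lemma rowG_ex i : exists k, G i k <> None.
Proof. by have [k [h _]] := diag_ex hGH i; exists k. Qed.
End Unit.
From mathcomp Require Import ring lra.
Section Main.
Variable R : realType.
Variable n : nat.
Variable G : 'M[trop R]_n.
Variable A : 'M[R]_n.
Variable s : 'I_n -> 'I_n.
Variable d : 'I_n -> R.
Hypothesis hGs : forall i, G i (s i) = Some (d i).
Hypothesis hGn : forall i k, k != s i -> G i k = None.
Hypothesis sinj : injective s.
Hypothesis hcom : tmulmx G (tfin A) = tmulmx (tfin A) G.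

Lemma eigv x i : tmulmxv G x i = tmul (Some (d i)) (x (s i)).
Proof. by rewrite /tmulmxv (big_single (k0:=s i)) ?hGs // => k /hGn ->. Qed.

Lemma E2 i j : d i + A (s i) (s j) = A i j + d j.
Proof.
have := congr1 (fun M : 'M[trop R]_n => M i (s j)) hcom => /=.
rewrite !mxE (big_single (k0:=s i)); last by move=> k /hGn ->.
rewrite (big_single (k0:=j)); last first.
  move=> k kj; rewrite hGn ?tfin; first by case: (tfin A i k).
  by apply: contra kj => /eqP /sinj ->.
by rewrite hGs /tfin !mxE hGs /= => [[]].
Qed.

Definition ss k i := \sum_(l < k) d (iter l s i).

Lemma ss_recr k i : ss k.+1 i = ss k i + d (iter k s i).
Proof. by rewrite /ss big_ord_recr. Qed.
Lemma ss_recl k i : ss k.+1 i = d i + ss k (s i).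
Proof. by rewrite /ss big_ord_recl; congr (_ + _); apply: eq_bigr => l _; rewrite iterSr. Qed.
Lemma ss0 i : ss 0 i = 0.
Proof. by rewrite /ss big_ord0. Qed.

Lemma A_iter k i j : A (iter k s i) (iter k s j) = A i j + ss k j - ss k i.
Proof.
elim: k => [|k IH]; first by rewrite !ss0; ring.
have := E2 (iter k s i) (iter k s j); rewrite !iterS !ss_recr IH; lra.
Qed.

Lemma x_iter x lam i v : (forall i, tmulmxv G x i = tmul (Some lam) (x i)) ->
  x i = Some v -> forall k, x (iter k s i) = Some (v + k%:R * lam - ss k i).
Proof.
move=> hx hv; elim=> [|k IH]; first by rewrite ss0 /= hv; congr Some; ring.
have := hx (iter k s i); rewrite eigv IH iterS.
case: (x (s (iter k s i))) => [u|] //= [] e.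
by rewrite ss_recr -natr1; congr Some; lra.
Qed.
End Main.
Section Main2.
Variable R : realType.
Variable n : nat.
Variable G : 'M[trop R]_n.
Variable A : 'M[R]_n.
Variable s : 'I_n -> 'I_n.
Variable d : 'I_n -> R.
Hypothesis hGs : forall i, G i (s i) = Some (d i).
Hypothesis hGn : forall i k, k != s i -> G i k = None.
Hypothesis sinj : injective s.
Hypothesis hcom : tmulmx G (tfin A) = tmulmx (tfin A) G.
Variable m : nat.
Hypothesis m0 : (0 < m)%N.
Hypothesis hper : forall i, iter m s i = i.

Lemma ssm_const i j : ss s d m i = ss s d m j.
Proof. have := A_iter hGs hGn sinj hcom m i j; rewrite !hper; lra. Qed.

Lemma mR0 : (m%:R : R) != 0.
Proof. by rewrite pnatr_eq0 -lt0n. Qed.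

Lemma eig_val lam i0 : teigenvalue G lam -> lam = ss s d m i0 / m%:R.
Proof.
case=> x [[j hj] hx]; case E: (x j) hj => [v|] // _.
have := x_iter hGs hGn hx E m; rewrite hper E => -[] e.
rewrite (ssm_const i0 j); apply: (mulIf mR0); rewrite mulfVK ?mR0 //; lra.
Qed.

Definition XX i := \sum_(k < m) ss s d k i.

Lemma XX_rec i : XX (s i) + m%:R * d i = XX i + ss s d m i.
Proof.
have h1 : \sum_(k < m) ss s d k.+1 i = XX (s i) + m%:R * d i.
  under eq_bigr => k _ do rewrite ss_recl.
  by rewrite big_split /= sumr_const card_ord addrC mulr_natl.
have h2 : \sum_(k < m.+1) ss s d k i = XX i + ss s d m i by rewrite big_ord_recr.
rewrite -h1; move: h2; rewrite big_ord_recl ss0 add0r => ->; done.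
Qed.

Lemma eig_ex i0 : teigenvalue G (ss s d m i0 / m%:R).
Proof.
exists (fun i => Some (XX i / m%:R)); split.
  by exists i0.
move=> i; rewrite (eigv hGs hGn) /=; congr Some.
have := XX_rec i; rewrite (ssm_const i i0) => e.
apply: (mulIf mR0); rewrite !mulrDl !mulfVK ?mR0 //; lra.
Qed.
End Main2.
Theorem lemma7p6 (R : realType) (n : nat) (hn : (0 < n)%N)
  (A : 'M[R]_n) (G : 'M[trop R]_n) :
  tunit G ->
  tmulmx G (tfin A) = tmulmx (tfin A) G ->
  exists! lam : R, teigenvalue G lam.
Proof.
move=> [H [hGH hHG]] hcom.
pose s i := odflt i [pick k | G i k != None].
have hs : forall i, G i (s i) <> None.
  move=> i; rewrite /s; case: pickP => [k /eqP //|h0] /=.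
  have [k hk] := rowG_ex hGH i; by move: (h0 k) => /negbFE /eqP.
pose d i := odflt 0 (G i (s i)).
have hGs : forall i, G i (s i) = Some (d i).
  by move=> i; rewrite /d; case: (G i (s i)) (hs i).
have hGn : forall i k, k != s i -> G i k = None.
  move=> i k ks; case E: (G i k) => [v|] //.
  have kne : G i k <> None by rewrite E.
  by case/eqP: ks; exact: (rowG_uniq hGH hHG kne (hs i)).
have sinj : injective s.
  move=> i i' e; apply: (colG_uniq hGH hHG (k:=s i)); first exact: hs.
  by rewrite e; apply: hs.
pose p := perm sinj.
pose m := #[p]%g.
have m0 : (0 < m)%N by apply: order_gt0.
have hper : forall i, iter m s i = i.
  move=> i; have := permX p i m; rewrite expg_order perm1 => e.
  rewrite {2}e; apply: eq_iter => j; by rewrite permE.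
pose i0 := Ordinal hn.
exists (ss s d m i0 / m%:R); split.
  exact: (eig_ex hGs hGn sinj hcom m0 hper).
by move=> lam hl; rewrite (eig_val hGs hGn sinj hcom m0 hper i0 hl).
Qed.
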